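(* Let $\sigma:\mathbb{R}\to\mathbb{R}$ be an increasing odd homeomorphism. The union of all $\sigma$-rational lines is dense in $\mathbb{R}^2$.
   Context: $h_\sigma(x,y)=(x+\sigma^{-1}(y),y)$, $v_\sigma(x,y)=(x,\sigma(x)+y)$. The $\sigma$-rational lines are: the axes $Ox=\mathbb{R}\times\{0\}$ and $Oy=\{0\}\times\mathbb{R}$; the sets $m(Ox)$ with $m$ in the monoid (containing the identity) generated by $h_\sigma,v_\sigma$; and the sets $m(Oy)$ with $m$ in the monoid generated by $h_\sigma^{-1},v_\sigma^{-1}$. *)

(* Defs.v *)
From HB Require Import structures.
From mathcomp Require Import all_boot all_order all_algebra.
From mathcomp Require Import all_classical all_reals all_analysis.
Set Implicit Arguments. Unset Strict Implicit. Unset Printing Implicit Defensive.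
Import Order.TTheory GRing.Theory Num.Theory.
Local Open Scope classical_set_scope.
Local Open Scope ring_scope.

Section SigmaLines.
Variable R : realType.

Definition h_sigma (sinv : R -> R) (p : R * R) : R * R := (p.1 + sinv p.2, p.2).
Definition v_sigma (sigma : R -> R) (p : R * R) : R * R := (p.1, sigma p.1 + p.2).
Definition h_sigma_inv (sinv : R -> R) (p : R * R) : R * R := (p.1 - sinv p.2, p.2).
Definition v_sigma_inv (sigma : R -> R) (p : R * R) : R * R := (p.1, p.2 - sigma p.1).

(* the composite of a word in two generators f (true) and g (false);
   the empty word gives the identity: these are exactly the elements of the
   monoid generated by f and g *)
Definition word_map (f g : R * R -> R * R) (w : seq bool) : R * R -> R * R :=
  foldr (fun b acc => (if b then f else g) \o acc) id w.

Definition Ox : set (R * R) := [set p | p.2 = 0].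
Definition Oy : set (R * R) := [set p | p.1 = 0].

Definition sigma_rational_line (sigma sinv : R -> R) (L : set (R * R)) : Prop :=
  L = Ox \/ L = Oy
  \/ (exists w, L = word_map (h_sigma sinv) (v_sigma sigma) w @` Ox)
  \/ (exists w, L = word_map (h_sigma_inv sinv) (v_sigma_inv sigma) w @` Oy).

Definition sigma_rational_union (sigma sinv : R -> R) : set (R * R) :=
  \bigcup_(L in sigma_rational_line sigma sinv) L.

End SigmaLines.

(* Main.v *)
Require Import Defs.
From HB Require Import structures.
From mathcomp Require Import all_boot all_order all_algebra.
From mathcomp Require Import all_classical all_reals all_analysis.
From mathcomp Require Import lra.
Import Order.TTheory GRing.Theory Num.Theory.
Import numFieldNormedType.Exports.
Local Open Scope classical_set_scope.
Local Open Scope ring_scope.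

Lemma sinv_lt (R : realType) (sigma sinv : R -> R)
  (sigmaK : cancel sigma sinv) (sinvK : cancel sinv sigma)
  (sigma_incr : forall x y : R, x < y -> sigma x < sigma y) x y :
  x < y -> sinv x < sinv y.
Proof.
move=> xy; case: (ltP (sinv x) (sinv y)) => // h.
have : sigma (sinv y) <= sigma (sinv x).
  case: (eqVneq (sinv y) (sinv x)) => [->//|ne].
  by apply/ltW/sigma_incr; rewrite lt_neqAle ne.
by rewrite !sinvK => /(lt_le_trans xy); rewrite ltxx.
Qed.

Lemma contB (R : realType) (f g : R -> R) :
  continuous f -> continuous g -> continuous (fun t => f t - g t).
Proof. by move=> cf cg x; apply: cvgB; [apply: cf | apply: cg]. Qed.

Lemma contC (R : realType) (f g : R -> R) :
  continuous f -> continuous g -> continuous (fun t => g (f t)).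
Proof. by move=> cf cg x; apply: (continuous_comp (cf x) (cg _)). Qed.

Lemma mono_le (R : realType) (f : R -> R) (incr : forall x y : R, x < y -> f x < f y) x y :
  x <= y -> f x <= f y.
Proof. by rewrite le_eqVlt => /orP [/eqP ->//|/incr/ltW]. Qed.

Lemma key (R : realType) (sigma sinv : R -> R)
  (sigmaK : cancel sigma sinv) (sinvK : cancel sinv sigma)
  (sigma_cont : continuous sigma) (sinv_cont : continuous sinv)
  (sigma_incr : forall x y : R, x < y -> sigma x < sigma y)
  (sigma0 : sigma 0 = 0) (d : R) (d0 : 0 < d) (n : nat) :
  forall (m : nat) (g1 g2 : R -> R), continuous g1 -> continuous g2 ->
  0 < g1 0 -> 0 < g2 0 -> 0 < g1 1 -> 0 < g2 1 -> g1 0 + d <= g1 1 -> g2 1 <= g2 0 ->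
  g2 1 < n%:R * sigma d -> g1 1 < m%:R * sinv (g2 1) ->
  exists t, 0 <= t <= 1 /\ exists w x,
    (g1 t, g2 t) = word_map (h_sigma sinv) (v_sigma sigma) w (x, sigma x).
Proof.
have sinv_incr := @sinv_lt _ _ _ sigmaK sinvK sigma_incr.
have si0 : sinv 0 = 0 by rewrite -{1}sigma0 sigmaK.
elim: n => [|n IHn] m g1 g2 c1 c2 p10 p20 p11 p21 gap dec bn.
  by move: bn; rewrite mulr0n mul0r => /(lt_trans p21); rewrite ltxx.
elim: m g1 g2 c1 c2 p10 p20 p11 p21 gap dec bn => [|m IHm] g1 g2 c1 c2 p10 p20 p11 p21 gap dec bn bm.
  by move: bm; rewrite mulr0n mul0r => /(lt_trans p11); rewrite ltxx.
have sg01 : sigma (g1 0) <= sigma (g1 1).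
  by apply: (@mono_le _ _ sigma_incr); apply: le_trans gap; rewrite lerDl ltW.
have si01 : sinv (g2 1) <= sinv (g2 0) by apply: (@mono_le _ _ sinv_incr).
have sd : sigma d < sigma (g1 1).
  by apply: sigma_incr; apply: lt_le_trans gap; rewrite ltrDr.
case: (ltP (g2 0) (sigma (g1 0))) => hP.
  have hQ : g2 1 < sigma (g1 1) by apply: le_lt_trans dec (lt_le_trans hP sg01).
  have pos y x : y < sigma x -> 0 < x - sinv y.
    by move=> /sinv_incr; rewrite sigmaK subr_gt0.
  have c1' : continuous (fun t => g1 t - sinv (g2 t)).
    by apply: contB => //; apply: contC.
  have gap' : g1 0 - sinv (g2 0) + d <= g1 1 - sinv (g2 1).
    by rewrite addrAC; apply: lerB.
  have bm' : g1 1 - sinv (g2 1) < m%:R * sinv (g2 1).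
    by rewrite ltrBlDr addrC -[X in X + _]mul1r -mulrDl -mulrS.
  have [] := IHm (fun t => g1 t - sinv (g2 t)) g2 c1' c2 (pos _ _ hP) p20 (pos _ _ hQ) p21 gap' dec bn bm'.
  move=> t [t01 [w [x hx]]]; exists t; split => //; exists (true :: w), x.
  by rewrite /= -hx /h_sigma /= subrK.
case: (ltP 0 (g2 1 - sigma (g1 1))) => hQ.
  have p2' : 0 < g2 0 - sigma (g1 0) by apply: lt_le_trans hQ _; apply: lerB.
  have bn' : g2 1 - sigma (g1 1) < n%:R * sigma d.
    by rewrite ltrBlDr (lt_le_trans bn) // mulrS mulrDl mul1r addrC lerD2l ltW.
  have s0 : 0 < sinv (g2 1 - sigma (g1 1)).
    by have := sinv_incr _ _ hQ; rewrite si0.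
  have c2' : continuous (fun t => g2 t - sigma (g1 t)).
    by apply: contB => //; apply: contC.
  have dec' : g2 1 - sigma (g1 1) <= g2 0 - sigma (g1 0) by apply: lerB.
  set M := Num.Def.archi_bound (g1 1 / sinv (g2 1 - sigma (g1 1))).
  have bm' : g1 1 < M%:R * sinv (g2 1 - sigma (g1 1)).
    rewrite -ltr_pdivrMr //; apply: archi_boundP.
    by rewrite divr_ge0 // ltW.
  have [] := IHn M g1 _ c1 c2' p10 p2' p11 hQ gap dec' bn' bm'.
  move=> t [t01 [w [x hx]]]; exists t; split => //; exists (false :: w), x.
  by rewrite /= -hx /v_sigma /= addrC subrK.
have c2' : continuous (fun t => g2 t - sigma (g1 t)).
  by apply: contB => //; apply: contC.
have [c c01 hc] : exists2 c, c \in `[0, 1] & g2 c - sigma (g1 c) = 0.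
  apply: IVT => //; first exact: continuous_subspaceT.
  rewrite /= ge_min le_max; apply/andP; split; apply/orP.
    by right.
  by left; rewrite subr_ge0.
exists c; split; first by move: c01; rewrite in_itv.
exists [::], (g1 c) => /=.
by move/eqP: hc; rewrite subr_eq0 => /eqP ->.
Qed.

Lemma word_conj (R : realType) (f g f' g' phi : R * R -> R * R) :
  (forall p, f' (phi p) = phi (f p)) -> (forall p, g' (phi p) = phi (g p)) ->
  forall w p, word_map f' g' w (phi p) = phi (word_map f g w p).
Proof.
move=> hf hg; elim=> [//|b w IH] p /=.
by rewrite IH; case: b.
Qed.

Lemma word_rcons (R : realType) (f g : R * R -> R * R) w b p :
  word_map f g (rcons w b) p = word_map f g w ((if b then f else g) p).
Proof. by elim: w => [//|c w IH] /=; rewrite IH. Qed.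

Lemma Q1 (R : realType) (sigma sinv : R -> R)
  (sigmaK : cancel sigma sinv) (sinvK : cancel sinv sigma)
  (sigma_cont : continuous sigma) (sinv_cont : continuous sinv)
  (sigma_incr : forall x y : R, x < y -> sigma x < sigma y)
  (sigma0 : sigma 0 = 0) (a b e : R) :
  0 < a -> 0 < b -> 0 < e -> exists w x,
    `|(word_map (h_sigma sinv) (v_sigma sigma) w (x, sigma x)).1 - a| < e /\
    (word_map (h_sigma sinv) (v_sigma sigma) w (x, sigma x)).2 = b.
Proof.
move=> a0 b0 e0.
have sinv_incr := @sinv_lt _ _ _ sigmaK sinvK sigma_incr.
have si0 : sinv 0 = 0 by rewrite -{1}sigma0 sigmaK.
set d := e / 2.
have d0 : 0 < d by rewrite divr_gt0.
have sd0 : 0 < sigma d by rewrite -sigma0; apply: sigma_incr.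
have sb0 : 0 < sinv b by rewrite -si0; apply: sinv_incr.
have ad0 : 0 < a + d by rewrite addr_gt0.
set N := Num.Def.archi_bound (b / sigma d).
set M := Num.Def.archi_bound ((a + d) / sinv b).
have bn : b < N%:R * sigma d.
  by rewrite -ltr_pdivrMr //; apply: archi_boundP; rewrite divr_ge0 // ltW.
have bm : a + d < M%:R * sinv b.
  by rewrite -ltr_pdivrMr //; apply: archi_boundP; rewrite divr_ge0 // ltW.
have c1 : continuous (fun t : R => a + t * d).
  move=> x; apply: cvgD; first exact: cvg_cst.
  by apply: cvgMl; exact: cvg_id.
have c2 : continuous (fun t : R => b) by move=> x; exact: cvg_cst.
have [] := @key R sigma sinv sigmaK sinvK sigma_cont sinv_cont sigma_incr sigma0 d d0 N M
  (fun t => a + t * d) (fun t => b) c1 c2.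
- by rewrite mul0r addr0.
- by [].
- by rewrite mul1r.
- by [].
- by rewrite mul0r addr0 mul1r.
- by [].
- by [].
- by rewrite mul1r.
move=> t [/andP [t0 t1] [w [x hx]]]; exists w, x; rewrite -hx /=; split => //.
rewrite addrAC subrr add0r ger0_norm ?mulr_ge0 ?(ltW d0) //.
apply: (le_lt_trans (y := d)); first by rewrite ler_piMl // ltW.
by rewrite /d ltr_pdivrMr // ltr_pMr // ltr1n.
exact: ltW.
Qed.

Lemma open_box (R : realType) (O : set (R * R)) a b : open O -> O (a,b) ->
  exists2 e : R, 0 < e & forall x y, `|x - a| < e -> `|y - b| < e -> O (x,y).
Proof.
move=> oO Oab.
have : nbhs (a,b) O by apply: open_nbhs_nbhs; split.
move=> /nbhs_ballP [e e0 he]; exists e => // x y hx hy.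
by apply: he; split => /=; rewrite /ball /= distrC.
Qed.

Theorem proposition3 (R : realType) (sigma sinv : R -> R)
  (sigmaK : cancel sigma sinv) (sinvK : cancel sinv sigma)
  (sigma_cont : continuous sigma) (sinv_cont : continuous sinv)
  (sigma_incr : forall x y : R, x < y -> sigma x < sigma y)
  (sigma_odd : forall x : R, sigma (- x) = - sigma x) :
  dense (sigma_rational_union sigma sinv).
Proof.
have sigma0 : sigma 0 = 0.
  by have := sigma_odd 0; rewrite oppr0 => h; lra.
have sinv_odd y : sinv (- y) = - sinv y.
  by rewrite -{1}(sinvK y) -sigma_odd sigmaK.
set H := h_sigma sinv; set V := v_sigma sigma.
set Hi := h_sigma_inv sinv; set Vi := v_sigma_inv sigma.
pose np (p : R * R) := (- p.1, - p.2).
pose rp (p : R * R) := (- p.1, p.2).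
have nH p : H (np p) = np (H p).
  by rewrite /H /h_sigma /np /= sinv_odd opprD.
have nV p : V (np p) = np (V p).
  by rewrite /V /v_sigma /np /= sigma_odd opprD.
have nHi p : Hi (np p) = np (Hi p).
  by rewrite /Hi /h_sigma_inv /np /= sinv_odd opprB opprK addrC.
have nVi p : Vi (np p) = np (Vi p).
  by rewrite /Vi /v_sigma_inv /np /= sigma_odd opprB opprK addrC.
have rH p : Hi (rp p) = rp (H p).
  by rewrite /H /Hi /h_sigma /h_sigma_inv /rp /= opprD.
have rV p : Vi (rp p) = rp (V p).
  by rewrite /V /Vi /v_sigma /v_sigma_inv /rp /= sigma_odd opprK addrC.
have Q1' := @Q1 R sigma sinv sigmaK sinvK sigma_cont sinv_cont sigma_incr sigma0.
have memOx w p : Ox p -> sigma_rational_union sigma sinv (word_map H V w p).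
  move=> Op; exists (word_map H V w @` @Ox R); last by exists p.
  by right; right; left; exists w.
have memOy w p : Oy p -> sigma_rational_union sigma sinv (word_map Hi Vi w p).
  move=> Op; exists (word_map Hi Vi w @` @Oy R); last by exists p.
  by right; right; right; exists w.
have HOy x : (x, sigma x) = H (0, sigma x) by rewrite /H /h_sigma /= sigmaK add0r.
have VOx x : (x, sigma x) = V (x, 0) by rewrite /V /v_sigma /= addr0.
move=> O [[a b] Oab] oO.
have [e e0 he] := @open_box R O a b oO Oab.
have [hb|hb|hb] := ltrgtP b 0; last first.
  exists (a, b); split => //; rewrite hb.
  by exists (@Ox R); [left | ].
all: try have nb : 0 < - b by rewrite oppr_gt0.
all: (have [ha|ha|ha] := ltrgtP a 0; last first;
  [exists (a, b); split => //; rewrite ha; by exists (@Oy R); [right; left | ] | | ]).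
all: try have na : 0 < - a by rewrite oppr_gt0.
  have [w [x [h1 h2]]] := Q1' a b e ha hb e0.
  set z := word_map _ _ w _ in h1 h2.
  exists z; split.
    by rewrite [z]surjective_pairing; apply: he; rewrite ?h2 ?subrr ?normr0.
  by rewrite /z VOx -(@word_rcons _ _ _ w false); apply: memOx.
(* a < 0, b > 0 : Q2 *)
  have [w [x [h1 h2]]] := Q1' (- a) b e na hb e0.
  set z := word_map _ _ w _ in h1 h2.
  exists (rp z); split.
    rewrite /rp; apply: he => /=; last by rewrite h2 subrr normr0.
    by rewrite -opprD normrN; move: h1; rewrite opprK.
  rewrite /z HOy -(@word_rcons _ _ _ w true) -(@word_conj _ _ _ _ _ _ rH rV).
  by apply: memOy; rewrite /rp /Oy /= oppr0.
(* a > 0, b < 0 : Q4 *)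
  have [w [x [h1 h2]]] := Q1' a (- b) e ha nb e0.
  set z := word_map _ _ w _ in h1 h2.
  exists (rp (np z)); split.
    rewrite /rp /np; apply: he => /=; last by rewrite h2 opprK subrr normr0.
    by rewrite opprK.
  rewrite /z HOy -(@word_rcons _ _ _ w true) -(@word_conj _ _ _ _ _ _ nH nV) -(@word_conj _ _ _ _ _ _ rH rV).
  by apply: memOy; rewrite /np /rp /Oy /= !oppr0.
(* a < 0, b < 0 : Q3 *)
  have [w [x [h1 h2]]] := Q1' (- a) (- b) e na nb e0.
  set z := word_map _ _ w _ in h1 h2.
  exists (np z); split.
    rewrite /np; apply: he => /=; last by rewrite h2 opprK subrr normr0.
    by rewrite -opprD normrN; move: h1; rewrite opprK.
  rewrite /z VOx -(@word_rcons _ _ _ w false) -(@word_conj _ _ _ _ _ _ nH nV); apply: memOx.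
  by rewrite /np /Ox /= oppr0.
Qed.
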